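(* Let $K_0$ be a finite extension of $\mathbb{Q}_2$ with absolute ramification index $e_0$, and let $K_2/K_0$ be a totally ramified cyclic extension of degree $4$ with Galois group generated by $\sigma$, with intermediate field $K_1$ (the fixed field of $\sigma^2$), whose lower ramification break numbers $b_1<b_2$ are odd with $b_1>e_0$ and $b_2=b_1+2e_0$. Then for every odd integer $a$ there are $\alpha,\rho\in K_2$ with $v_2(\alpha)=a$, $v_2(\rho)=a+(b_2-b_1)$ such that $\mu:=(\sigma+1)\alpha-\rho$ lies in $K_1$ and $v_2(\mu)=a+b_1$. Furthermore, if $a+b_1\equiv 0\pmod 4$, then $\alpha,\rho$ can be chosen so that in addition $\mu\in K_0$.
   Context: $v_2$ is the normalized valuation of $K_2$. The lower ramification break numbers of $\mathrm{Gal}(K_2/K_0)$ are the integers $j\ge1$ with $G_j\ne G_{j+1}$ in the lower-numbering ramification filtration. $(\sigma+1)\alpha=\sigma(\alpha)+\alpha$. *)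

(* Defs.v *)
From HB Require Import structures.
From mathcomp Require Import all_boot all_order all_algebra all_fingroup all_field.
Set Implicit Arguments. Unset Strict Implicit. Unset Printing Implicit Defensive.
Import Order.TTheory GRing.Theory Num.Theory.
Local Open Scope ring_scope.

(* Discrete valuations on a field K, given as v : K -> int; the value v 0 is
   irrelevant (v 0 = +oo conventionally), so every statement guards x != 0. *)
Section Val.
Variable K : fieldType.
Variable v : K -> int.

Definition vge (x : K) (n : int) : Prop := x = 0 \/ n <= v x.

Definition vint (x : K) : Prop := vge x 0.

Definition normalized_dvaluation : Prop :=
  [/\ forall x y, x != 0 -> y != 0 -> v (x * y) = v x + v y,
      forall x y, x != 0 -> y != 0 -> x + y != 0 -> Num.min (v x) (v y) <= v (x + y)
    & exists pi, pi != 0 /\ v pi = 1].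

Definition vcomplete : Prop :=
  forall u : nat -> K,
    (forall N : int, exists M, forall m n, (M <= m)%N -> (M <= n)%N -> vge (u m - u n) N) ->
    exists l, forall N : int, exists M, forall n, (M <= n)%N -> vge (u n - l) N.

Definition finite_residue : Prop :=
  exists s : seq K, (forall r, r \in s -> vint r) /\
    forall x, vint x -> exists2 r, r \in s & vge (x - r) 1.

(* K is a finite extension of Q_2 equipped with its normalized valuation v:
   characteristic 0, complete, finite residue field of characteristic 2. *)
Definition two_adic_local_field : Prop :=
  [/\ [pchar K] =i pred0, normalized_dvaluation, vcomplete, finite_residue
    & 0 < v 2%:R].
End Val.

Section Ram.
Variables (F : fieldType) (L : splittingFieldType F) (v : L -> int).

Definition in_ram_group (i : int) (s : gal_of {:L}) : Prop :=
  forall x, vint v x -> vge v (s x - x) (i + 1).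

Definition lower_break (j : int) : Prop :=
  1 <= j /\ exists2 s, s \in 'Gal({:L} / 1%AS)%g &
    ~ (in_ram_group j s <-> in_ram_group (j + 1) s).
End Ram.

(* Main.v *)
Require Import Defs.
From HB Require Import structures.
From mathcomp Require Import all_boot all_order all_algebra all_fingroup all_field.
From mathcomp Require Import zify ring.
Import Order.TTheory GRing.Theory Num.Theory.
Set Implicit Arguments. Unset Strict Implicit. Unset Printing Implicit Defensive.
Local Open Scope ring_scope.


Lemma ar1 (x y : int) : (4 %| x)%Z -> (4 %| y - 2)%Z -> x = y -> False.
Proof. lia. Qed.
Lemma ar2 (x y : int) : (4 %| x)%Z -> (4 %| y)%Z -> y <= x + 2 -> y <= x.
Proof. lia. Qed.
Lemma ar3 (b : int) : ~~ (2 %| b)%Z -> (4 %| 1%:Z + b - 2)%Z \/ (4 %| 3%:Z + b - 2)%Z.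
Proof. lia. Qed.

Lemma ar4 (x y a b : int) (j : nat) : a + b <= x -> j%:Z + b = y + 2 -> a + 1 <= x - y + j%:Z.
Proof. lia. Qed.
Lemma ar5 (a b e : int) : a + 2 * e = a + (b + 2 * e - b).
Proof. lia. Qed.

Section Main.
Variables (K0 : fieldType) (K2 : splittingFieldType K0) (v : K2 -> int).
Hypothesis vM : forall {x y : K2}, x != 0 -> y != 0 -> v (x * y) = v x + v y.
Hypothesis vD : forall {x y : K2}, x != 0 -> y != 0 -> x + y != 0 ->
  Num.min (v x) (v y) <= v (x + y).
Hypothesis v4 : forall c : K0, c != 0 -> (4 %| v c%:A)%Z.
Hypothesis dim4 : \dim {:K2} = 4%N.

Lemma v1 : v 1 = 0.
Proof. have h : (1 : K2) != 0 := oner_neq0 K2. have := vM h h; rewrite mulr1; lia. Qed.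

Lemma vN1 : v (-1) = 0.
Proof.
have h : (-1 : K2) != 0 by rewrite oppr_eq0 oner_neq0.
have := vM h h; rewrite mulrNN mulr1 v1; lia.
Qed.

Lemma vN x : v (- x) = v x.
Proof.
have [->|x0] := eqVneq x 0; first by rewrite oppr0.
have h : (-1 : K2) != 0 by rewrite oppr_eq0 oner_neq0.
by rewrite -mulN1r vM // vN1 add0r.
Qed.

Lemma vV x : x != 0 -> v (x^-1) = - v x.
Proof.
move=> x0; have := vM x0 (invr_neq0 x0); rewrite mulfV // v1; lia.
Qed.

Lemma vX x (n : nat) : x != 0 -> v (x ^+ n) = n%:Z * v x.
Proof.
move=> x0; elim: n => [|n IH]; first by rewrite expr0 v1 mul0r.
rewrite exprS vM ?expf_neq0 // IH; lia.
Qed.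

Lemma vXz x (n : int) : x != 0 -> v (x ^ n) = n * v x.
Proof.
move=> x0; case: n => n; first by rewrite vX.
rewrite NegzE -exprnN vV ?expf_neq0 // vX //; lia.
Qed.

Definition vg (x : K2) (n : int) := x = 0 \/ n <= v x.

Lemma vge0 n : vg 0 n. Proof. by left. Qed.

Lemma vgeW {x n m} : vg x n -> m <= n -> vg x m.
Proof. case=> [->|h] hm; [by left|right; lia]. Qed.

Lemma vgeE x : x != 0 -> vg x (v x).
Proof. by move=> _; right. Qed.

Lemma vgeP {x n} : x != 0 -> vg x n -> n <= v x.
Proof. by move=> /eqP x0 [//|]. Qed.

Lemma vgeD {x y n} : vg x n -> vg y n -> vg (x + y) n.
Proof.
case=> [->|hx]; first by rewrite add0r.
case=> [->|hy]; first by rewrite addr0; right.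
have [x0|x0] := eqVneq x 0; first by rewrite x0 add0r; right.
have [y0|y0] := eqVneq y 0; first by rewrite y0 addr0; right.
have [s0|s0] := eqVneq (x + y) 0; first by left.
right; have := vD x0 y0 s0; lia.
Qed.

Lemma vgeN {x n} : vg x n -> vg (- x) n.
Proof. by case=> [->|h]; [rewrite oppr0; left|right; rewrite vN]. Qed.

Lemma vgeB {x y n} : vg x n -> vg y n -> vg (x - y) n.
Proof. by move=> hx hy; apply: vgeD => //; apply: vgeN. Qed.

Lemma vgeM {x y n m} : vg x n -> vg y m -> vg (x * y) (n + m).
Proof.
case=> [->|hx]; first by rewrite mul0r; left.
case=> [->|hy]; first by rewrite mulr0; left.
have [x0|x0] := eqVneq x 0; first by rewrite x0 mul0r; left.
have [y0|y0] := eqVneq y 0; first by rewrite y0 mulr0; left.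
right; rewrite vM //; lia.
Qed.

Lemma vge_sum (I : Type) (r : seq I) (P : pred I) (F : I -> K2) n :
  (forall i, P i -> vg (F i) n) -> vg (\sum_(i <- r | P i) F i) n.
Proof.
move=> h; apply: (big_ind (fun z => vg z n)); [exact: vge0|move=> x y; exact: vgeD|exact: h].
Qed.

Lemma vgeX {x} {k : nat} {n} : vg x n -> vg (x ^+ k) (k%:Z * n).
Proof.
move=> h; elim: k => [|k IH]; first by rewrite expr0 mul0r; right; rewrite v1.
rewrite exprS; apply: vgeW (vgeM h IH) _; lia.
Qed.

Definition vex (x : K2) (n : int) := x != 0 /\ v x = n.

Lemma vexD {x y n} : vex x n -> vg y (n + 1) -> vex (x + y) n.
Proof.
case=> x0 <-; case=> [->|hy]; first by rewrite addr0.
have [y0|y0] := eqVneq y 0; first by rewrite y0 addr0.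
have [s0|s0] := eqVneq (x + y) 0.
  by move/eqP: s0; rewrite addr_eq0 => /eqP yx; move: hy; rewrite yx vN; lia.
split=> //; have h1 := vD x0 y0 s0.
have h2 : (x + y) + (- y) = x by rewrite addrK.
have ny0 : - y != 0 by rewrite oppr_eq0.
have := vD s0 ny0; rewrite h2 => /(_ x0); rewrite vN; lia.
Qed.

Lemma vexDl {x y n} : vg x (n + 1) -> vex y n -> vex (x + y) n.
Proof. by move=> hx hy; rewrite addrC; apply: vexD. Qed.

Lemma vexM {x y n m} : vex x n -> vex y m -> vex (x * y) (n + m).
Proof. by case=> x0 <- [y0 <-]; split; [rewrite mulf_neq0|rewrite vM]. Qed.

Lemma vexN {x n} : vex x n -> vex (- x) n.
Proof. by case=> x0 <-; split; [rewrite oppr_eq0|rewrite vN]. Qed.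

Lemma vex_ge {x n} : vex x n -> vg x n.
Proof. by case=> _ <-; right. Qed.

Lemma vex_gt {x n m} : vex x n -> vg x m -> m <= n.
Proof. by case=> x0 <-; apply: vgeP. Qed.


Lemma arith4 (p q r s : int) (i j : nat) : (i<4)%N -> (j<4)%N -> i != j ->
  (4 %| p)%Z -> (4 %| q - i%:Z)%Z -> (4 %| r)%Z -> (4 %| s - j%:Z)%Z ->
  p + q <= r + s -> p + q < r + s.
Proof. lia. Qed.

Definition good4 (X : 4.-tuple K2) :=
  forall i : 'I_4, X`_i != 0 /\ (4 %| v X`_i - (i : nat)%:Z)%Z.

Lemma alg_neq0 (c : K0) : c != 0 -> c%:A != 0 :> K2.
Proof. by move=> c0; rewrite scaler_eq0 negb_or c0 oner_neq0. Qed.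

Lemma vscale (c : K0) (x : K2) : c != 0 -> x != 0 -> v (c *: x) = v c%:A + v x.
Proof. by move=> c0 x0; rewrite -[c *: x]mulr_algl vM // alg_neq0. Qed.

Lemma expand_min X (c : 'I_4 -> K0) : good4 X -> (exists i, c i != 0) ->
  exists i, [/\ c i != 0, vex (\sum_j c j *: X`_j) (v (c i *: X`_i)),
   forall j, j != i -> c j != 0 -> v (c i *: X`_i) < v (c j *: X`_j) &
   forall j, c j != 0 -> v (c i *: X`_i) <= v (c j *: X`_j)].
Proof.
move=> gX [i0 ci0].
pose f j := v (c j *: X`_j).
case: (arg_minP f (P := fun j => c j != 0) ci0) => i ci Hmin.
have strict j : j != i -> c j != 0 -> f i < f j.
  move=> ji cj; have := Hmin j cj; rewrite /f.
  rewrite (vscale ci (proj1 (gX i))) (vscale cj (proj1 (gX j))).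
  apply: (@arith4 _ _ _ _ i j); [exact: ltn_ord|exact: ltn_ord| |exact: v4|by case: (gX i)
    |exact: v4|by case: (gX j)].
  by rewrite eq_sym.
have Hrest : vg (\sum_(j < 4 | j != i) c j *: X`_j) (f i + 1).
  apply: vge_sum => j ji; have [->|cj] := eqVneq (c j) 0.
    by rewrite scale0r; left.
  by right; have := strict j ji cj; rewrite /f -lezD1 /=.
exists i; split.
- exact: ci.
- rewrite (bigD1 i) //=; apply: vexD Hrest.
  split => //; rewrite scaler_eq0 negb_or ci; by case: (gX i).
- move=> j ji cj; exact: strict.
- move=> j cj; have [->|ji] := eqVneq j i; first by [].
  exact/ltW/strict.
Qed.

Lemma expand X : good4 X -> forall z : K2, exists c : 'I_4 -> K0,
  z = \sum_j c j *: X`_j.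
Proof.
move=> gX z.
have fX : free X.
  apply/freeP => k hk i; apply/eqP/negP => /negP ki.
  have [j [_ [h _] _ _]] := expand_min gX (ex_intro _ i ki).
  by move: h; rewrite hk eqxx.
have bX : basis_of fullv X.
  by rewrite basisEfree fX subvf size_tuple dim4 /=.
exists (fun j => coord X j z); apply: coord_span.
by rewrite (span_basis bX) memvf.
Qed.


Lemma good_pow (r : K2) : r != 0 -> v r = 1 -> good4 [tuple r ^+ j | j < 4].
Proof.
move=> r0 vr j; rewrite nth_mktuple; split; first by rewrite expf_neq0.
rewrite vX // vr mulr1 subrr; exact: dvdz0.
Qed.

Lemma sumXp (r : K2) (c : 'I_4 -> K0) :
  \sum_j c j *: [tuple r ^+ j | j < 4]`_j = \sum_(j < 4) c j *: r ^+ j.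
Proof. by apply: eq_bigr => j _; rewrite nth_mktuple. Qed.

Variable pi : K2.
Hypothesis pi0 : pi != 0.
Hypothesis vpi : v pi = 1.

Lemma eis : exists c : 'I_4 -> K0,
  [/\ pi ^+ 4 = \sum_(j < 4) c j *: pi ^+ j, vex (c ord0)%:A 4 &
      forall j : 'I_4, j != ord0 -> c j != 0 -> 4 <= v (c j)%:A].
Proof.
have gX := good_pow pi0 vpi.
have [c hc] := expand gX (pi ^+ 4).
exists c.
have c_nz : exists i, c i != 0.
  case: (pickP (fun i => c i != 0)) => [i ci|h0]; first by exists i.
  move: hc; rewrite big1 => [|j _]; last by have := h0 j; move/negbFE/eqP => ->; rewrite scale0r.
  by move/eqP; rewrite expf_eq0 /= (negPf pi0).
have [i [ci [s0 vs] hlt hle]] := expand_min gX c_nz.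
rewrite -hc in s0 vs; rewrite nth_mktuple in vs hlt hle.
rewrite vX // vpi (vscale ci (expf_neq0 _ pi0)) vX // vpi in vs.
have v4i := v4 ci.
have i0 : i = ord0.
  apply/val_inj => /=; have := ltn_ord i; move: vs v4i; lia.
subst i.
split; first by rewrite hc sumXp.
  by split; [exact: alg_neq0|move: vs; rewrite /= !mulr1 addr0 => <-].
move=> j j0 cj; have := hlt j j0 cj; rewrite !nth_mktuple.
rewrite (vscale cj (expf_neq0 _ pi0)) (vscale ci (expf_neq0 _ pi0)) !vX // vpi -vs.
have := ltn_ord j; have := v4 cj; lia.
Qed.


Lemma galA (s : gal_of {:K2}) (c : K0) : s (c%:A) = c%:A.
Proof. by rewrite -[c%:A]mulr1 mulr_algl linearZ /= rmorph1. Qed.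

Lemma gal_neq0 (s : gal_of {:K2}) x : x != 0 -> s x != 0.
Proof. by rewrite fmorph_eq0. Qed.

Lemma gal_sum (s : gal_of {:K2}) (c : 'I_4 -> K0) (r : K2) :
  s (\sum_(j < 4) c j *: r ^+ j) = \sum_(j < 4) c j *: (s r) ^+ j.
Proof. by rewrite linear_sum; apply: eq_bigr => j _; rewrite linearZ rmorphXn. Qed.

Lemma vs_pi (s : gal_of {:K2}) : s pi != 0 /\ v (s pi) = 1.
Proof.
have [c [hc [c00 vc0] hcj]] := eis.
set r := s pi; have r0 : r != 0 by apply: gal_neq0.
split => //.
have e : r ^+ 4 = c ord0 *: 1 + \sum_(j < 4 | j != ord0) c j *: r ^+ j.
  rewrite /r -rmorphXn hc; apply: etrans (gal_sum s c pi) _; by rewrite (bigD1 ord0) //= expr0.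
have lhs : vex (r ^+ 4) (4 * v r) by split; [rewrite expf_neq0|rewrite vX].
have term j : j != ord0 -> c j != 0 -> v (c j *: r ^+ j) = v (c j)%:A + (j : nat)%:Z * v r.
  by move=> _ cj; rewrite (vscale cj (expf_neq0 _ r0)) vX.
have c0e : c ord0 *: (1 : K2) = (c ord0)%:A by [].
have [le0|gt0] := lerP (v r) 0.
  have : vg (r ^+ 4) (4 * v r + 1).
    rewrite e; apply: vgeD.
      by rewrite c0e; right; lia.
    apply: vge_sum => j j0; have [->|cj] := eqVneq (c j) 0; first by rewrite scale0r; left.
    right; rewrite term //; have := hcj j j0 cj; have := ltn_ord j; nia.
  move/(vex_gt lhs); lia.
have [ge2|lt2] := lerP 2 (v r); last lia.
have : vex (r ^+ 4) 4.
  rewrite e; apply: vexD; first by rewrite c0e.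
  apply: vge_sum => j j0; have [->|cj] := eqVneq (c j) 0; first by rewrite scale0r; left.
  right; rewrite term //; have := hcj j j0 cj; have : (0 < nat_of_ord j)%N.
    by rewrite lt0n.
  nia.
case: lhs => _ h1 [_ h2]; move: h1 h2 ge2 => ->; lia.
Qed.


Lemma vsE (s : gal_of {:K2}) z : z != 0 -> v (s z) = v z.
Proof.
move=> z0.
have [r0 vr] := vs_pi s.
have gp := good_pow pi0 vpi; have gr := good_pow r0 vr.
have [c hc] := expand gp z.
have hsz : s z = \sum_j c j *: [tuple s pi ^+ j | j < 4]`_j.
  rewrite sumXp hc sumXp; exact: gal_sum.
have c_nz : exists i, c i != 0.
  case: (pickP (fun i => c i != 0)) => [i ci|h0]; first by exists i.
  move: z0; rewrite hc big1 ?eqxx // => j _.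
  by have := h0 j; move/negbFE/eqP => ->; rewrite scale0r.
have [i1 [ci1 [_ e1] _ le1]] := expand_min gp c_nz.
have [i2 [ci2 [_ e2] _ le2]] := expand_min gr c_nz.
rewrite -hc in e1; rewrite -hsz in e2.
have f1 j : c j != 0 -> v (c j *: [tuple pi ^+ j | j < 4]`_j) = v (c j)%:A + (j : nat)%:Z.
  by move=> cj; rewrite nth_mktuple (vscale cj (expf_neq0 _ pi0)) vX // vpi mulr1.
have f2 j : c j != 0 -> v (c j *: [tuple s pi ^+ j | j < 4]`_j) = v (c j)%:A + (j : nat)%:Z.
  by move=> cj; rewrite nth_mktuple (vscale cj (expf_neq0 _ r0)) vX // vr mulr1.
have := le1 i2 ci2; have := le2 i1 ci1.
rewrite e1 e2 !f1 // !f2 //; lia.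
Qed.


Lemma exp_pi z : exists c : 'I_4 -> K0, z = \sum_(j < 4) c j *: pi ^+ j /\
  (z != 0 -> forall j, c j != 0 -> v z <= v (c j)%:A + (j : nat)%:Z).
Proof.
have gp := good_pow pi0 vpi.
have [c hc] := expand gp z; exists c; split; first by rewrite hc sumXp.
move=> z0.
have c_nz : exists i, c i != 0.
  case: (pickP (fun i => c i != 0)) => [i ci|h0]; first by exists i.
  move: z0; rewrite hc big1 ?eqxx // => j _.
  by have := h0 j; move/negbFE/eqP => ->; rewrite scale0r.
have [i1 [ci1 [_ e1] _ le1]] := expand_min gp c_nz.
rewrite -hc in e1; move=> j cj; rewrite e1.
have f1 k : c k != 0 -> v (c k *: [tuple pi ^+ j | j < 4]`_k) = v (c k)%:A + (k : nat)%:Z.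
  by move=> ck; rewrite nth_mktuple (vscale ck (expf_neq0 _ pi0)) vX // vpi mulr1.
by rewrite -f1 //; apply: le1.
Qed.

Lemma vsub_sum (s : gal_of {:K2}) (c : 'I_4 -> K0) :
  s (\sum_(j < 4) c j *: pi ^+ j) - \sum_(j < 4) c j *: pi ^+ j =
  \sum_(j < 4) c j *: (s pi ^+ j - pi ^+ j).
Proof.
rewrite (_ : s _ = \sum_(j < 4) c j *: s pi ^+ j); last exact: gal_sum.
by rewrite -sumrB; apply: eq_bigr => j _; rewrite scalerBr.
Qed.

Lemma powdiff (s : gal_of {:K2}) (j : nat) D :
  vg (s pi - pi) D -> vg (s pi ^+ j - pi ^+ j) (D + j%:Z - 1).
Proof.
move=> hD; case: j => [|j]; first by rewrite !expr0 subrr; left.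
have [r0 vr] := vs_pi s.
rewrite subrXX.
have hs : vg (\sum_(i < j.+1) s pi ^+ (j.+1.-1 - i) * pi ^+ i) j%:Z.
  apply: vge_sum => i _.
  apply: vgeW (vgeM (vgeX (k := (j.+1.-1 - i)%N) (vgeE r0))
                              (vgeX (k := i) (vgeE pi0))) _.
  rewrite vr vpi !mulr1; have := ltn_ord i; lia.
apply: vgeW (vgeM hD hs) _; lia.
Qed.

Lemma vsub_ge (s : gal_of {:K2}) D z : vg (s pi - pi) D -> z != 0 ->
  vg (s z - z) (v z + D - 1).
Proof.
move=> hD z0; have [c [hc hle]] := exp_pi z.
rewrite hc vsub_sum -hc; apply: vge_sum => j _.
have [->|cj] := eqVneq (c j) 0; first by rewrite scale0r; left.
rewrite -mulr_algl; apply: vgeW (vgeM (vgeE (alg_neq0 cj)) (powdiff j hD)) _.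
have := hle z0 j cj; lia.
Qed.

Lemma vsub_int (s : gal_of {:K2}) D z : vg (s pi - pi) D -> 0 <= v z ->
  vg (s z - z) D.
Proof.
move=> hD z0; have [->|nz] := eqVneq z 0; first by rewrite rmorph0 subrr; left.
have [c [hc hle]] := exp_pi z.
rewrite hc vsub_sum; apply: vge_sum => j _.
have [->|cj] := eqVneq (c j) 0; first by rewrite scale0r; left.
have [j0|jn0] := eqVneq (nat_of_ord j) 0%N.
  by rewrite j0 !expr0 subrr scaler0; left.
rewrite -mulr_algl; apply: vgeW (vgeM (vgeE (alg_neq0 cj)) (powdiff j hD)) _.
have := hle nz j cj; have := v4 cj; have := ltn_ord j; move: jn0; lia.
Qed.


Variable e0 : int.
Hypothesis v2e : v 2%:R = 4 * e0.
Hypothesis e0pos : 0 < e0.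

Hypothesis two0 : (2%:R : K2) != 0.

Lemma vex2 : vex 2%:R (4 * e0). Proof. by split. Qed.

Lemma vex3 : vex 3%:R 0.
Proof.
rewrite (_ : 3%:R = 1 + 2%:R); last exact: mulrS.
apply: vexD; first by split; [exact: oner_neq0|exact: v1].
right; rewrite v2e; lia.
Qed.

Lemma exp_pi_min z : z != 0 -> exists c : 'I_4 -> K0, exists i : 'I_4,
  [/\ z = \sum_(j < 4) c j *: pi ^+ j, c i != 0,
      v z = v (c i)%:A + (i : nat)%:Z &
      forall j, j != i -> c j != 0 -> v z < v (c j)%:A + (j : nat)%:Z].
Proof.
move=> z0; have gp := good_pow pi0 vpi.
have [c hc] := expand gp z; exists c.
have c_nz : exists i, c i != 0.
  case: (pickP (fun i => c i != 0)) => [i ci|h0]; first by exists i.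
  move: z0; rewrite hc big1 ?eqxx // => j _.
  by have := h0 j; move/negbFE/eqP => ->; rewrite scale0r.
have [i [ci [_ e1] lt1 _]] := expand_min gp c_nz.
rewrite -hc in e1.
have f1 k : c k != 0 -> v (c k *: [tuple pi ^+ j | j < 4]`_k) = v (c k)%:A + (k : nat)%:Z.
  by move=> ck; rewrite nth_mktuple (vscale ck (expf_neq0 _ pi0)) vX // vpi mulr1.
exists i; split => //; first by rewrite hc sumXp.
  by rewrite e1 f1.
by move=> j ji cj; rewrite e1 -!f1 //; apply: lt1.
Qed.

Lemma cube_diff (s : gal_of {:K2}) D : vex (s pi - pi) D -> 2 <= D ->
  vex (s pi ^+ 3 - pi ^+ 3) (D + 2).
Proof.
move=> hD D2; set d := s pi - pi.
have -> : s pi = pi + d by rewrite /d addrC subrK.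
have -> : (pi + d) ^+ 3 - pi ^+ 3 = d * (3%:R * pi ^+ 2 + 3%:R * pi * d + d ^+ 2).
  by ring.
apply: vexM => //.
rewrite -addrA; apply: vexD.
  have := vexM vex3 (vexM (conj pi0 vpi) (conj pi0 vpi)).
  by rewrite expr2 mulrA add0r.
apply: vgeD.
  apply: vgeW (vgeM (vgeM (vex_ge vex3) (vgeE pi0)) (vex_ge hD)) _; rewrite vpi; lia.
apply: vgeW (vgeX (k := 2) (vex_ge hD)) _; lia.
Qed.

Lemma vsub_odd (s : gal_of {:K2}) D z : vex (s pi - pi) D -> 2 <= D ->
  z != 0 -> ~~ (2 %| v z)%Z -> vex (s z - z) (v z + D - 1).
Proof.
move=> hD D2 z0 odd_z.
have [c [i [hc ci vz hlt]]] := exp_pi_min z0.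
have v4i := v4 ci.
have hi : (nat_of_ord i = 1)%N \/ (nat_of_ord i = 3)%N.
  have := ltn_ord i; move: odd_z; rewrite vz; lia.
rewrite hc vsub_sum -hc (bigD1 i) //=.
apply: vexD.
  rewrite -mulr_algl; have -> : v z + D - 1 = v (c i)%:A + (D + (i : nat)%:Z - 1) by lia.
  apply: vexM; first by split => //; exact: alg_neq0.
  case: hi => ->; first by rewrite !expr1; case: hD => h1 h2; split => //; rewrite h2; lia.
  by have := cube_diff hD D2; rewrite (_ : D + 3%:Z - 1 = D + 2) //; lia.
apply: vge_sum => j ji.
have [->|cj] := eqVneq (c j) 0; first by rewrite scale0r; left.
rewrite -mulr_algl; apply: vgeW (vgeM (vgeE (alg_neq0 cj)) (powdiff j (vex_ge hD))) _.
have := hlt j ji cj; lia.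
Qed.


Variable sigma : gal_of {:K2}.
Hypothesis hGal : 'Gal({:K2} / 1%AS)%g = <[sigma]>%g.
Hypothesis hord : #[sigma]%g = 4%N.

Lemma galX n a : (sigma ^+ n.+1)%g a = sigma ((sigma ^+ n)%g a).
Proof. by rewrite expgSr galM ?memvf. Qed.

Lemma galXi n a : (sigma ^+ n)%g a = iter n sigma a.
Proof. by elim: n => [|n IH]; [rewrite expg0 gal_id|rewrite galX IH]. Qed.

Lemma sig4 a : sigma (sigma (sigma (sigma a))) = a.
Proof. by rewrite -[LHS]/(iter 4 sigma a) -galXi -hord expg_order gal_id. Qed.

Lemma ram_mem (j : int) (s : gal_of {:K2}) : in_ram_group v j s -> vg (s pi - pi) (j + 1).
Proof. by move=> h; apply: h; right; rewrite vpi. Qed.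

Lemma ram_ge (j : int) (s : gal_of {:K2}) D : vg (s pi - pi) D -> j + 1 <= D -> in_ram_group v j s.
Proof.
move=> hD jD x hx; have : vg (s x - x) D.
  case: hx => [->|hx]; first by rewrite rmorph0 subrr; left.
  exact: vsub_int.
by case=> [->|h]; [left|right; lia].
Qed.

Lemma break_vex (j : int) : lower_break v j ->
  exists2 s, s \in 'Gal({:K2} / 1%AS)%g & vex (s pi - pi) (j + 1).
Proof.
case=> j1 [s sG hs]; exists s => //.
have eA : in_ram_group v j s <-> vg (s pi - pi) (j + 1).
  by split; [exact: ram_mem|move=> h; apply: ram_ge h _].
have eB : in_ram_group v (j + 1) s <-> vg (s pi - pi) (j + 1 + 1).
  by split; [exact: ram_mem|move=> h; apply: ram_ge h _].
have [z0|z0] := eqVneq (s pi - pi) 0.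
  by exfalso; apply: hs; rewrite eA eB z0; split; left.
split => //.
have [h1|h1] := lerP (j + 1) (v (s pi - pi)); last first.
  exfalso; apply: hs; rewrite eA eB; split; case=> [/eqP|]; rewrite ?(negPf z0) //; lia.
have [h2|h2] := lerP (j + 1 + 1) (v (s pi - pi)); last lia.
by exfalso; apply: hs; rewrite eA eB; split => _; right.
Qed.

Lemma m13 : v (sigma (sigma (sigma pi)) - pi) = v (sigma pi - pi).
Proof.
have [e|nz] := eqVneq (sigma (sigma (sigma pi)) - pi) 0.
  move/eqP: e; rewrite subr_eq0 => /eqP h.
  have h2 : sigma pi = pi by rewrite -[RHS](sig4 pi) h.
  by rewrite h h2.
have e : sigma (sigma (sigma (sigma pi)) - pi) = pi - sigma pi.
  by rewrite rmorphB; congr (_ - _); exact: sig4.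
by rewrite -(vsE sigma nz) e -vN opprB.
Qed.

Lemma breaks_id (j : int) : lower_break v j ->
  vex (sigma pi - pi) (j + 1) \/ vex (sigma (sigma pi) - pi) (j + 1).
Proof.
move=> /break_vex [s]; rewrite hGal => /cycleP [k ->].
rewrite -expg_mod_order hord.
have : (k %% 4 < 4)%N by rewrite ltn_mod.
move: (k %% 4)%N => i; case: i => [|[|[|[|i]]]] //= _.
- by rewrite gal_id subrr; case; rewrite eqxx.
- by rewrite expg1; left.
- by rewrite galXi; right.
- rewrite galXi => -[nz hv]; left; split.
  2: by rewrite -m13; exact: hv.
  apply/negP; rewrite subr_eq0 => /eqP h; move: nz.
  by rewrite -[iter 3 sigma pi]/(sigma (sigma (sigma pi))) !h subrr eqxx.
Qed.


Variables b1 b2 : int.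
Hypothesis hb : forall j, lower_break v j <-> j = b1 \/ j = b2.
Hypothesis b12 : b1 < b2.

Lemma m12 : sigma pi - pi != 0 -> vg (sigma (sigma pi) - pi) (v (sigma pi - pi)).
Proof.
move=> nz.
have -> : sigma (sigma pi) - pi = sigma (sigma pi - pi) + (sigma pi - pi).
  by rewrite rmorphB addrA subrK.
apply: vgeD; last exact: vgeE.
by right; rewrite vsE.
Qed.

Lemma breaks : vex (sigma pi - pi) (b1 + 1) /\ vex (sigma (sigma pi) - pi) (b2 + 1).
Proof.
have [h1|h1] := breaks_id (proj2 (hb b1) (or_introl erefl));
have [h2|h2] := breaks_id (proj2 (hb b2) (or_intror erefl)).
- by case: h1 => _ e1; case: h2 => _ e2; move: b12; rewrite -e1 -e2 e1; lia.
- by [].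
- have := m12 (proj1 h2); case: h1 => n1 e1; case: h2 => _ e2.
  by case=> [/eqP|]; [rewrite (negPf n1)|rewrite e1 e2; lia].
- by case: h1 => _ e1; case: h2 => _ e2; move: b12; rewrite -e1 -e2 e1; lia.
Qed.


Lemma vs2 z : z != 0 -> v (sigma (sigma z)) = v z.
Proof. by move=> z0; rewrite vsE ?vsE // gal_neq0. Qed.

Definition pi1 := pi * sigma (sigma pi).

Lemma pi1_neq0 : pi1 != 0.
Proof. by rewrite mulf_neq0 // !gal_neq0. Qed.

Lemma vpi1 : v pi1 = 2.
Proof. by rewrite /pi1 vM ?vs2 ?vpi // !gal_neq0. Qed.

Lemma s2pi1 : sigma (sigma pi1) = pi1.
Proof.
rewrite /pi1; transitivity (sigma (sigma pi) * sigma (sigma (sigma (sigma pi)))).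
  by rewrite !rmorphM.
by rewrite sig4 mulrC.
Qed.

Definition Ytup := [tuple pi1 ^+ (j./2) * pi ^+ (odd j) | j < 4].

Lemma goodY : good4 Ytup.
Proof.
move=> j; rewrite nth_mktuple.
have vq k l : v (pi1 ^+ k * pi ^+ l) = (2 * k + l)%N%:Z.
  by rewrite vM ?expf_neq0 ?pi1_neq0 // !vX ?pi1_neq0 // vpi1 vpi; lia.
split; first by rewrite mulf_neq0 // expf_neq0 // pi1_neq0.
rewrite vq; case: j => [[|[|[|[|?]]]] ?] //=; exact: dvdz0.
Qed.

Lemma decompY z : exists a0 a1 a2 a3 : K0,
  z = a0%:A + a2%:A * pi1 + (a1%:A + a3%:A * pi1) * pi /\
  (z != 0 -> [/\ a0 != 0 -> v z <= v a0%:A, a1 != 0 -> v z <= v a1%:A + 1,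
                 a2 != 0 -> v z <= v a2%:A + 2 & a3 != 0 -> v z <= v a3%:A + 3]).
Proof.
have [c hc] := expand goodY z.
have hle : z != 0 -> forall j, c j != 0 -> v z <= v (c j)%:A + (j : nat)%:Z.
  move=> z0.
  have c_nz : exists i, c i != 0.
    case: (pickP (fun i => c i != 0)) => [i ci|h0]; first by exists i.
    move: z0; rewrite hc big1 ?eqxx // => j _.
    by have := h0 j; move/negbFE/eqP => ->; rewrite scale0r.
  have [i1 [ci1 [_ e1] _ le1]] := expand_min goodY c_nz.
  rewrite -hc in e1; move=> j cj; rewrite e1.
  have f1 k : c k != 0 -> v (c k *: Ytup`_k) = v (c k)%:A + (k : nat)%:Z.
    move=> ck; rewrite (vscale ck (proj1 (goodY k))) nth_mktuple.
    rewrite vM ?expf_neq0 ?pi1_neq0 // !vX ?pi1_neq0 // vpi1 vpi.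
    by congr (_ + _); case: k {ck} => [[|[|[|[|?]]]] ?].
  by rewrite -f1 //; apply: le1.
move: hc hle; rewrite !big_ord_recl big_ord0 !nth_mktuple /= => hc hle.
exists (c ord0), (c (lift ord0 ord0)), (c (lift ord0 (lift ord0 ord0))),
  (c (lift ord0 (lift ord0 (lift ord0 ord0)))).
split.
  have e2 (k : K0) : k *: pi1 = k%:A * pi1 by rewrite mulr_algl.
  have e1 (k : K0) : k *: pi = k%:A * pi by rewrite mulr_algl.
  rewrite hc !expr0 !expr1 !mulr1 !mul1r !e2 (scalerAl _ pi1 pi) !e2 !e1 addr0.
  rewrite mulrDl -!addrA; congr (_ + _); rewrite addrC -addrA; congr (_ + _).
  by rewrite addrC.
move=> z0; split => ck; have := hle z0 _ ck; rewrite /= /bump /=; lia.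
Qed.


Lemma two_term (a0 a2 : K0) : a0%:A + a2%:A * pi1 != 0 ->
  [/\ vg a0%:A (v (a0%:A + a2%:A * pi1)), vg (a2%:A * pi1) (v (a0%:A + a2%:A * pi1))
    & (2 %| v (a0%:A + a2%:A * pi1))%Z].
Proof.
have [->|n0] := eqVneq a0 0.
  rewrite scale0r add0r; have [->|n2] := eqVneq a2 0.
    by rewrite scale0r mul0r eqxx.
  move=> _; split; [by left| by right|].
  rewrite vM ?alg_neq0 ?pi1_neq0 // vpi1; have := v4 n2; lia.
have [->|n2] := eqVneq a2 0.
  rewrite scale0r mul0r addr0 => _; split; [by right|by left|].
  have := v4 n0; lia.
move=> nz.
have va2 : v (a2%:A * pi1) = v a2%:A + 2 by rewrite vM ?alg_neq0 ?pi1_neq0 // vpi1.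
have := v4 n0; have := v4 n2 => d2 d0.
have [lt|ge] := ltrP (v a0%:A) (v (a2%:A * pi1)).
  have h : vex (a0%:A + a2%:A * pi1) (v a0%:A).
    apply: vexD; first by split => //; exact: alg_neq0.
    by right; lia.
  case: h => _ ->; split; [by right|right; lia|lia].
have h : vex (a0%:A + a2%:A * pi1) (v (a2%:A * pi1)).
  apply: vexDl; last by split => //; rewrite mulf_neq0 ?alg_neq0 ?pi1_neq0.
  by right; move: ge; rewrite va2; lia.
case: h => _ ->; split; [right; move: ge; rewrite va2; lia|by right|rewrite va2; lia].
Qed.

Lemma s2alg (c : K0) : sigma (sigma c%:A) = c%:A.
Proof. by rewrite !galA. Qed.

Lemma s2_two (a0 a2 : K0) : sigma (sigma (a0%:A + a2%:A * pi1)) = a0%:A + a2%:A * pi1.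
Proof.
transitivity (sigma (sigma a0%:A) + sigma (sigma a2%:A) * sigma (sigma pi1)).
  by rewrite !rmorphD !rmorphM.
by rewrite !s2alg s2pi1.
Qed.

Lemma decomp_uw z : exists a0 a1 a2 a3 : K0,
  z = (a0%:A + a2%:A * pi1) + (a1%:A + a3%:A * pi1) * pi.
Proof. by have [a0 [a1 [a2 [a3 [h _]]]]] := decompY z; exists a0, a1, a2, a3. Qed.

Lemma s2pi_neq : sigma (sigma pi) - pi != 0.
Proof. by case: (proj2 breaks). Qed.

Lemma decompK1 z : sigma (sigma z) = z -> exists a0 a2 : K0, z = a0%:A + a2%:A * pi1.
Proof.
have [a0 [a1 [a2 [a3 ->]]]] := decomp_uw z => h.
exists a0, a2.
have hu := s2_two a0 a2; have hw := s2_two a1 a3.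
move: h hu hw; move: (a0%:A + _ * pi1) (a1%:A + _ * pi1) => u w h hu hw.
have hz : sigma (sigma (u + w * pi)) = u + w * sigma (sigma pi).
  transitivity (sigma (sigma u) + sigma (sigma w) * sigma (sigma pi)).
    by rewrite !rmorphD !rmorphM.
  by rewrite hu hw.
have : w * (sigma (sigma pi) - pi) = 0.
  move: h; rewrite hz => /addrI h'.
  by rewrite mulrBr h' subrr.
by move/eqP; rewrite mulf_eq0 (negPf s2pi_neq) orbF => /eqP ->; rewrite mul0r addr0.
Qed.


Hypothesis b2odd : ~~ (2 %| b2)%Z.
Hypothesis b1odd : ~~ (2 %| b1)%Z.
Hypothesis b2def : b2 = b1 + 2 * e0.
Hypothesis b1gt : e0 < b1.

Lemma vex_d1 : vex (sigma pi - pi) (b1 + 1). Proof. exact: (proj1 breaks). Qed.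
Lemma vex_d2 : vex (sigma (sigma pi) - pi) (b2 + 1). Proof. exact: (proj2 breaks). Qed.

Lemma b2_lt : b2 < 4 * e0.
Proof.
set t := pi + sigma (sigma pi).
have ht : sigma (sigma t) = t.
  transitivity (sigma (sigma pi) + sigma (sigma (sigma (sigma pi)))).
    by rewrite !rmorphD.
  by rewrite sig4 addrC.
have [a0 [a2 ea]] := decompK1 ht.
have te : t = 2%:R * pi + (sigma (sigma pi) - pi).
  by rewrite /t; ring.
have [lt|ge] := ltrP b2 (4 * e0) => //.
have h : vex t (4 * e0 + 1).
  rewrite te; apply: vexD; first exact: vexM vex2 (conj pi0 vpi).
  case: vex_d2 => _ e; right; rewrite e; move: b2odd ge; lia.
case: h => nz e; rewrite ea in nz e; have [_ _] := two_term nz.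
rewrite e; lia.
Qed.

Lemma b1_lt : b1 < 2 * e0.
Proof. have := b2_lt; rewrite b2def; lia. Qed.

Lemma s2X x : (sigma ^+ 2)%g x = sigma (sigma x).
Proof. by rewrite galXi. Qed.

Lemma spi1 : vg (sigma pi1 - pi1) (2 + 2 * b1).
Proof.
set A := sigma pi; set B := sigma (sigma pi); set C := sigma (sigma (sigma pi)).
have -> : sigma pi1 = A * C by rewrite /pi1 rmorphM.
have -> : A * C - pi1 = 2%:R * pi * (A - pi) + (A - pi) * (C - pi) + pi * (C - B - (A - pi)).
  rewrite /pi1 -/B; rewrite mulr2n; ring.
have [d0 vd] := vex_d1.
have hd3 : vg (C - pi) (b1 + 1).
  have [->|n3] := eqVneq (C - pi) 0; first by left.
  by right; rewrite /C m13 vd.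
have hD2 : vg ((sigma ^+ 2)%g pi - pi) (b2 + 1) by rewrite s2X; exact: vex_ge vex_d2.
have h3 := vsub_ge hD2 d0.
rewrite s2X rmorphB rmorphB in h3.
have eC : sigma (sigma A) = C by [].
have eB : sigma (sigma pi) = B by [].
apply: vgeD; [apply: vgeD|].
- apply: vgeW (vgeM (vgeM (vex_ge vex2) (vgeE pi0)) (vex_ge vex_d1)) _.
  rewrite vpi; have := b1_lt; lia.
- apply: vgeW (vgeM (vex_ge vex_d1) hd3) _; lia.
- apply: vgeW (vgeM (vgeE pi0) (_ : vg (C - B - (A - pi)) (b1 + 1 + b2))) _.
    by apply: vgeW h3 _; rewrite vd; lia.
  rewrite vpi; lia.
Qed.


Lemma K1_sig beta N : sigma (sigma beta) = beta -> vg beta N ->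
  vg (sigma beta - beta) (N + 2 * b1).
Proof.
move=> hb0; have [a0 [a2 ->]] := decompK1 hb0 => hN.
have [e|nz] := eqVneq (a0%:A + a2%:A * pi1) 0.
  by rewrite e rmorph0 subrr; left.
have [_ h2 _] := two_term nz.
have hv := vgeP nz hN.
have e : sigma (a0%:A + a2%:A * pi1) - (a0%:A + a2%:A * pi1) =
         a2%:A * (sigma pi1 - pi1).
  transitivity (sigma a0%:A + sigma a2%:A * sigma pi1 - (a0%:A + a2%:A * pi1)).
    by rewrite rmorphD rmorphM.
  rewrite !galA; ring.
rewrite e.
have [->|n2] := eqVneq a2 0; first by rewrite scale0r mul0r; left.
apply: vgeW (vgeM (vgeE (alg_neq0 n2)) spi1) _.
case: h2 => [/eqP|h2]; first by rewrite mulf_eq0 (negPf (alg_neq0 n2)) (negPf pi1_neq0).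
move: h2; rewrite vM ?alg_neq0 ?pi1_neq0 // vpi1; lia.
Qed.

Lemma part1 alpha u w : alpha != 0 -> ~~ (2 %| v alpha)%Z ->
  sigma (sigma u) = u -> sigma (sigma w) = w -> sigma alpha + alpha = u + w * pi ->
  vex (w * pi) (v alpha + 2 * e0) /\ vex u (v alpha + b1).
Proof.
move=> a0 aodd hu hw hy.
set a := v alpha.
have b1pos : 2 <= b1 + 1 by lia.
have hd1 : vex (sigma alpha - alpha) (a + b1).
  by have := vsub_odd vex_d1 b1pos a0 aodd; rewrite (_ : a + (b1 + 1) - 1 = a + b1) //; lia.
have v2a : vex (2%:R * alpha) (4 * e0 + a) by apply: vexM vex2 (conj a0 erefl).
have hyv : vex (sigma alpha + alpha) (a + b1).
  rewrite (_ : sigma alpha + alpha = (sigma alpha - alpha) + 2%:R * alpha); last by ring.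
  apply: vexD hd1 _; apply: vgeW (vex_ge v2a) _; have := b1_lt; lia.
set beta := sigma (sigma alpha) + alpha.
have hbeta : vg beta (a + b2).
  have hD2 : vg ((sigma ^+ 2)%g pi - pi) (b2 + 1) by rewrite s2X; exact: vex_ge vex_d2.
  have h3 := vsub_ge hD2 a0; rewrite s2X in h3.
  rewrite /beta (_ : sigma (sigma alpha) + alpha = (sigma (sigma alpha) - alpha) + 2%:R * alpha); last by ring.
  apply: vgeD; first by apply: vgeW h3 _; lia.
  apply: vgeW (vex_ge v2a) _; have := b2_lt; lia.
have s2b : sigma (sigma beta) = beta.
  rewrite /beta; transitivity (sigma (sigma (sigma (sigma alpha))) + sigma (sigma alpha)).
    by rewrite !rmorphD.
  by rewrite sig4 addrC.
have hsb := K1_sig s2b hbeta.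
have hT : vg (sigma beta + beta) (a + b1 + 4 * e0 + 1).
  rewrite (_ : sigma beta + beta = (sigma beta - beta) + 2%:R * beta); last by ring.
  apply: vgeD; first by apply: vgeW hsb _; rewrite b2def; lia.
  apply: vgeW (vgeM (vex_ge vex2) hbeta) _; rewrite b2def; lia.
have ident : sigma (sigma (sigma alpha + alpha)) - (sigma alpha + alpha) =
             - (2%:R * (sigma alpha + alpha)) + (sigma beta + beta).
  transitivity (sigma (sigma (sigma alpha)) + sigma (sigma alpha) - (sigma alpha + alpha)).
    by rewrite !rmorphD.
  rewrite /beta; transitivity (- (2%:R * (sigma alpha + alpha)) +
     ((sigma (sigma (sigma alpha)) + sigma alpha) + (sigma (sigma alpha) + alpha))).
    ring.
  by rewrite [sigma (_ + _)]rmorphD.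
have hid : vex (sigma (sigma (sigma alpha + alpha)) - (sigma alpha + alpha)) (a + b1 + 4 * e0).
  rewrite ident; apply: vexD; first by apply: vexN; have := vexM vex2 hyv; rewrite (_ : 4 * e0 + (a + b1) = a + b1 + 4 * e0) //; lia.
  exact: hT.
have hz : sigma (sigma (u + w * pi)) - (u + w * pi) = w * (sigma (sigma pi) - pi).
  transitivity (sigma (sigma u) + sigma (sigma w) * sigma (sigma pi) - (u + w * pi)).
    by rewrite !rmorphD !rmorphM.
  rewrite hu hw; ring.
rewrite hy hz in hid.
case: hid => nzw ew.
have w0 : w != 0 by move: nzw; rewrite mulf_eq0 negb_or => /andP [].
have [_ ed2] := vex_d2.
rewrite (vM w0 (proj1 vex_d2)) ed2 in ew.
have hwpi : vex (w * pi) (a + 2 * e0).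
  by split; [rewrite mulf_neq0|rewrite vM // vpi; move: ew; rewrite b2def; lia].
split => //.
have -> : u = (sigma alpha + alpha) + - (w * pi) by rewrite hy addrK.
apply: vexD hyv _; apply: vgeN; apply: vgeW (vex_ge hwpi) _; have := b1_lt; lia.
Qed.


Lemma two_term_ex (a0 a2 : K0) : a0%:A + a2%:A * pi1 != 0 ->
  (a0 != 0 /\ v (a0%:A + a2%:A * pi1) = v a0%:A) \/
  (a2 != 0 /\ v (a0%:A + a2%:A * pi1) = v a2%:A + 2).
Proof.
have [->|n0] := eqVneq a0 0.
  rewrite scale0r add0r; have [->|n2] := eqVneq a2 0.
    by rewrite scale0r mul0r eqxx.
  by move=> _; right; split => //; rewrite vM ?alg_neq0 ?pi1_neq0 // vpi1.
have [->|n2] := eqVneq a2 0.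
  by rewrite scale0r mul0r addr0 => _; left.
move=> nz.
have va2 : v (a2%:A * pi1) = v a2%:A + 2 by rewrite vM ?alg_neq0 ?pi1_neq0 // vpi1.
have := v4 n0; have := v4 n2 => d2 d0.
have [lt|ge] := ltrP (v a0%:A) (v (a2%:A * pi1)).
  left; split => //.
  have h : vex (a0%:A + a2%:A * pi1) (v a0%:A).
    apply: vexD; first by split => //; exact: alg_neq0.
    by right; lia.
  by case: h.
right; split => //.
have h : vex (a0%:A + a2%:A * pi1) (v (a2%:A * pi1)).
  apply: vexDl; last by split => //; rewrite mulf_neq0 ?alg_neq0 ?pi1_neq0.
  by right; move: ge; rewrite va2; lia.
by case: h => _ ->.
Qed.

Lemma fixed_s2 x : sigma (sigma x) = x -> x \in fixedField <[(sigma ^+ 2)%g]>%g.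
Proof.
move=> hx; apply/fixedFieldP; first exact: memvf.
move=> g /cycleP [k ->]; rewrite -expgnA galXi.
elim: k => [|k IH]; first by rewrite muln0.
by rewrite mulnS /= IH hx.
Qed.

Lemma alg_mem1 (c : K0) : c%:A \in (1%VS : {vspace K2}).
Proof. by rewrite memvZ // memv_line. Qed.


Lemma pow_a (a : int) : pi ^ a != 0 /\ v (pi ^ a) = a.
Proof. by split; [rewrite expfz_neq0|rewrite vXz // vpi mulr1]. Qed.

Lemma main1 (a : int) : ~~ (2 %| a)%Z -> exists alpha rho : K2,
  [/\ alpha != 0 /\ v alpha = a, rho != 0 /\ v rho = a + (b2 - b1),
      (sigma alpha + alpha - rho) \in fixedField <[(sigma ^+ 2)%g]>%g &
      (sigma alpha + alpha - rho) != 0 /\ v (sigma alpha + alpha - rho) = a + b1].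
Proof.
move=> aodd; have [al0 va] := pow_a a.
have [a0 [a1 [a2 [a3 hy]]]] := decomp_uw (sigma (pi ^ a) + pi ^ a).
have aodd' : ~~ (2 %| v (pi ^ a))%Z by rewrite va.
have [[w0 ew] [u0 eu]] := part1 al0 aodd' (s2_two a0 a2) (s2_two a1 a3) hy.
exists (pi ^ a), ((a1%:A + a3%:A * pi1) * pi).
rewrite hy addrK; split => //.
- by split => //; rewrite ew va b2def; lia.
- exact/fixed_s2/s2_two.
- by rewrite eu va.
Qed.

Lemma main2 (a : int) : ~~ (2 %| a)%Z -> (4 %| a + b1)%Z -> exists alpha rho : K2,
  [/\ alpha != 0 /\ v alpha = a, rho != 0 /\ v rho = a + (b2 - b1),
      (sigma alpha + alpha - rho) \in fixedField <[(sigma ^+ 2)%g]>%g,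
      (sigma alpha + alpha - rho) \in 1%VS &
      (sigma alpha + alpha - rho) != 0 /\ v (sigma alpha + alpha - rho) = a + b1].
Proof.
move=> aodd a4; have [al0 va] := pow_a a.
set alpha := pi ^ a in al0 va *.
have [a0 [a1 [a2 [a3 hy]]]] := decomp_uw (sigma alpha + alpha).
have aodd' : ~~ (2 %| v alpha)%Z by rewrite va.
have [[w0 ew] [u0 eu]] := part1 al0 aodd' (s2_two a0 a2) (s2_two a1 a3) hy.
have [e2|n2] := eqVneq a2 0.
  exists alpha, ((a1%:A + a3%:A * pi1) * pi).
  rewrite hy addrK; split => //.
  - by split => //; rewrite ew va b2def; lia.
  - exact/fixed_s2/s2_two.
  - by rewrite e2 scale0r mul0r addr0 alg_mem1.
  - by rewrite eu va.
have [_ h2 _] := two_term u0.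
have va2 : a + b1 <= v a2%:A.
  case: h2 => [/eqP|h2]; first by rewrite mulf_eq0 (negPf (alg_neq0 n2)) (negPf pi1_neq0).
  move: h2; rewrite vM ?alg_neq0 ?pi1_neq0 // vpi1 eu va; apply: ar2 (v4 n2) a4.
have [j0 [hj0 hj0m]] : exists j0 : nat, (j0 = 1 \/ j0 = 3)%N /\ (4 %| j0%:Z + b1 - 2)%Z.
  by case: (ar3 b1odd) => h; [exists 1%N|exists 3%N]; split => //; [left|right].
set t0 := pi ^+ j0.
have t00 : t0 != 0 by rewrite expf_neq0.
have vt0 : v t0 = j0%:Z by rewrite vX // vpi mulr1.
have todd : ~~ (2 %| v t0)%Z by rewrite vt0; case: hj0 => ->.
have [c0 [c1 [c2 [c3 hz]]]] := decomp_uw (sigma t0 + t0).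
have [_ [u0' eu']] := part1 t00 todd (s2_two c0 c2) (s2_two c1 c3) hz.
have [[n0 e0']|[nc2 ec2]] := two_term_ex u0'.
  by exfalso; move: eu'; rewrite e0' vt0; apply: ar1 (v4 n0) hj0m.
rewrite eu' vt0 in ec2.
set k := a2 / c2.
have hk : k%:A * c2%:A = a2%:A :> K2 by rewrite mulr_algl scalerA divfK.
have k0 : k != 0 by rewrite mulf_neq0 ?invr_neq0.
have vk : v k%:A = v a2%:A - v c2%:A.
  by rewrite -hk vM ?alg_neq0 // addrK.
set alpha' := alpha - k%:A * t0.
have hdel : vg (- (k%:A * t0)) (a + 1).
  apply: vgeN; right; rewrite vM ?alg_neq0 // vk vt0; exact: ar4 va2 ec2.
have [al0' va'] : vex alpha' a by apply: vexD hdel; split.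
have aodd2 : ~~ (2 %| v alpha')%Z by rewrite va'.
pose u' : K2 := a0%:A - k%:A * c0%:A.
pose w' := (a1%:A + a3%:A * pi1) - k%:A * (c1%:A + c3%:A * pi1).
have hy' : sigma alpha' + alpha' = u' + w' * pi.
  transitivity ((sigma alpha + alpha) - k%:A * (sigma t0 + t0)).
    transitivity (sigma alpha - sigma k%:A * sigma t0 + (alpha - k%:A * t0)).
      by rewrite /alpha' rmorphB rmorphM.
    rewrite galA; ring.
  rewrite hy hz /u' /w' -hk; ring.
have hu' : sigma (sigma u') = u'.
  rewrite /u'; transitivity (sigma (sigma a0%:A) - sigma (sigma k%:A) * sigma (sigma c0%:A)).
    by rewrite !rmorphB !rmorphM.
  by rewrite !s2alg.
have hw' : sigma (sigma w') = w'.
  rewrite /w'; transitivity (sigma (sigma (a1%:A + a3%:A * pi1)) -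
     sigma (sigma k%:A) * sigma (sigma (c1%:A + c3%:A * pi1))).
    by rewrite !rmorphB !rmorphM.
  by rewrite !s2alg !s2_two.
have [[w0' ew'] [u0'' eu'']] := part1 al0' aodd2 hu' hw' hy'.
exists alpha', (w' * pi).
rewrite hy' addrK; split => //.
- by split => //; rewrite ew' va' b2def (ar5 a b1 e0).
- exact: fixed_s2.
- rewrite /u'; apply: rpredB; first exact: alg_mem1.
  by rewrite mulr_algl scalerA alg_mem1.
- by rewrite eu'' va'.
Qed.


End Main.

Unset Implicit Arguments.

Theorem lemma3p6
  (K0 : fieldType) (K2 : splittingFieldType K0) (v2 : K2 -> int)
  (sigma : gal_of {:K2}) (e0 b1 b2 : int) :
  two_adic_local_field v2 ->
  v2 2%:R = 4 * e0 ->
  galois 1%AS {:K2} ->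
  'Gal({:K2} / 1%AS)%g = <[sigma]>%g ->
  #[sigma]%g = 4%N ->
  (forall x : K0, x != 0 -> (4 %| v2 (in_alg K2 x))%Z) ->
  (forall j, lower_break v2 j <-> j = b1 \/ j = b2) ->
  b1 < b2 ->
  ~~ (2 %| b1)%Z -> ~~ (2 %| b2)%Z ->
  e0 < b1 -> b2 = b1 + 2 * e0 ->
  forall a : int, ~~ (2 %| a)%Z ->
    (exists alpha rho : K2,
       let mu := sigma alpha + alpha - rho in
       [/\ alpha != 0 /\ v2 alpha = a, rho != 0 /\ v2 rho = a + (b2 - b1),
           mu \in fixedField <[(sigma ^+ 2)%g]>%g & mu != 0 /\ v2 mu = a + b1])
    /\
    ((4 %| a + b1)%Z ->
     exists alpha rho : K2,
       let mu := sigma alpha + alpha - rho in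
       [/\ alpha != 0 /\ v2 alpha = a, rho != 0 /\ v2 rho = a + (b2 - b1),
           mu \in fixedField <[(sigma ^+ 2)%g]>%g, mu \in 1%VS
         & mu != 0 /\ v2 mu = a + b1]).
Proof.
move=> [hch [vM vD [pi [pi0 vpi]]] _ _ v2pos] v2e hgal hG hord htot hb b12 b1o b2o
  b1gt b2d a aodd.
have v4 : forall c : K0, c != 0 -> (4 %| v2 c%:A)%Z by move=> c /htot.
have dim4 : \dim {:K2} = 4%N.
  have := galois_dim hgal; rewrite hG => h.
  have h2 : (\dim_(1%AS : {subfield K2}) {:K2})%N = 4%N by rewrite h -hord.
  by move: h2; rewrite /= dimv1 divn1.
have two0 : (2%:R : K2) != 0.
  by rewrite (proj1 (pcharf0P K2) hch 2%N).
have e0pos : 0 < e0 by move: v2pos; rewrite v2e; lia.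
split.
  have [al [r h]] := main1 vM vD v4 dim4 pi0 vpi v2e e0pos two0 hG hord hb b12 b2o b1o b2d b1gt aodd.
  by exists al, r.
move=> h4.
have [al [r h]] := main2 vM vD v4 dim4 pi0 vpi v2e e0pos two0 hG hord hb b12 b2o b1o b2d b1gt aodd h4.
by exists al, r.
Qed.
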